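(* Let $f\in L^1(\mathbb{R}^2)$ and suppose there is $R>0$ with $\operatorname{supp} f\subset B(0;R)$. Let $C>0$ be a constant such that $C\|u\|_{L^2(\mathbb{R}^2)}\le \int_{\mathbb{R}^2}|u_x|+|u_y|$ for all $u\in BV(\mathbb{R}^2)$, and set $\lambda_0:=\frac{C}{R\sqrt{\pi}}$. If $0\le\lambda<\lambda_0$, then $u=0$ is the unique minimizer of $F_1$ over $BV(\mathbb{R}^2)$ and the unique minimizer of $\overline{F_1}$ over $BV(\mathbb{R}^2;\{0,1\})$.
   Context: For $u\in L^1_{loc}(\mathbb{R}^2)$ the anisotropic total variation is $\int_{\mathbb{R}^2}|u_x|+|u_y|:=\sup\{\int_{\mathbb{R}^2}u\,\mathrm{div}\,v : v\in C^1_c(\mathbb{R}^2;\mathbb{R}^2),\ |v(x)|_\infty\le 1\ \forall x\}$, where $|(a,b)|_\infty=\max(|a|,|b|)$. $BV(\mathbb{R}^2)$ is the space of $u\in L^1(\mathbb{R}^2)$ with finite (isotropic) total variation, and for $A\subset\mathbb{R}$, $BV(\mathbb{R}^2;A)$ denotes those $u\in BV(\mathbb{R}^2)$ with $u(x)\in A$ for a.e. $x$. For a fidelity parameter $\lambda\ge0$ and signal $f\in L^1(\mathbb{R}^2)$: $F_1(u)=\int_{\mathbb{R}^2}|u_x|+|u_y|+\lambda\|u-f\|_{L^1(\mathbb{R}^2)}$ for $u\in BV(\mathbb{R}^2)$, and $\overline{F_1}$ is the same expression restricted to $u\in BV(\mathbb{R}^2;\{0,1\})$. *)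

(* Defs.v *)
From HB Require Import structures.
From mathcomp Require Import all_boot all_order all_algebra.
From mathcomp Require Import all_classical all_reals all_analysis.
Set Implicit Arguments. Unset Strict Implicit. Unset Printing Implicit Defensive.
Import Order.TTheory GRing.Theory Num.Theory.
Import numFieldNormedType.Exports.
Local Open Scope classical_set_scope.
Local Open Scope ring_scope.

Section Defs.
Variable R : realType.

Definition leb2 := ((@lebesgue_measure R) \x (@lebesgue_measure R))%E.

Definition C1_R2 (g : R * R -> R) : Prop :=
  (forall x, derivable g x (1, 0)) /\ (forall x, derivable g x (0, 1)) /\
  continuous (fun x => 'D_(1, 0) g x) /\ continuous (fun x => 'D_(0, 1) g x).

Definition div2 (v1 v2 : R * R -> R) : R * R -> R :=
  fun x => 'D_(1, 0) v1 x + 'D_(0, 1) v2 x.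

Definition C1c_field (v1 v2 : R * R -> R) : Prop :=
  C1_R2 v1 /\ C1_R2 v2 /\ compact (closure [set x | v1 x != 0 \/ v2 x != 0]).

Definition aniso_TV (u : R * R -> R) : \bar R :=
  ereal_sup [set (\int[leb2]_x (u x * div2 v.1 v.2 x)%:E)%E
            | v in [set v : (R * R -> R) * (R * R -> R) | C1c_field v.1 v.2 /\
                        (forall x, `|v.1 x| <= 1 /\ `|v.2 x| <= 1)]].

Definition iso_TV (u : R * R -> R) : \bar R :=
  ereal_sup [set (\int[leb2]_x (u x * div2 v.1 v.2 x)%:E)%E
            | v in [set v : (R * R -> R) * (R * R -> R) | C1c_field v.1 v.2 /\
                        (forall x, v.1 x ^+ 2 + v.2 x ^+ 2 <= 1)]].

Definition L1 (u : R * R -> R) : Prop :=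
  leb2.-integrable setT (fun x => (u x)%:E).

Definition BV (u : R * R -> R) : Prop := L1 u /\ (iso_TV u < +oo)%E.

Definition BV01 (u : R * R -> R) : Prop :=
  BV u /\ {ae leb2, forall x, u x = 0 \/ u x = 1}.

Definition L1norm (g : R * R -> R) : \bar R := (\int[leb2]_x (`|g x|)%:E)%E.

(* F_1(u) = int |u_x|+|u_y| + lambda ||u - f||_{L^1} *)
Definition F1 (lam : R) (f u : R * R -> R) : \bar R :=
  (aniso_TV u + lam%:E * L1norm (fun x => (u x - f x)%R))%E.

Definition minimizer (S : (R * R -> R) -> Prop) (F : (R * R -> R) -> \bar R)
  (u : R * R -> R) : Prop :=
  S u /\ forall w, S w -> (F u <= F w)%E.

End Defs.

(* Main.v *)
Require Import Defs.
From HB Require Import structures.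
From mathcomp Require Import all_boot all_order all_algebra.
From mathcomp Require Import all_classical all_reals all_analysis.
From mathcomp Require Import ring lra.
From mathcomp Require Import measurable_realfun.
Import Order.TTheory GRing.Theory Num.Theory.
Import numFieldNormedType.Exports.
Local Open Scope classical_set_scope.
Local Open Scope ring_scope.
Section ae0.
Context d (T : measurableType d) (R : realType) (mu : {measure set T -> \bar R}).
Local Open Scope ereal_scope.
Import HBNNSimple.

Lemma ge0_ae0_integral (f : T -> \bar R) : (forall x, 0 <= f x) ->
  {ae mu, forall x, f x = 0} -> \int[mu]_x f x = 0.
Proof.
move=> f0 fae; apply/eqP; rewrite eq_le integral_ge0 // andbT.
rewrite ge0_integralTE //.
apply/ge_ereal_sup => _ [h /= hf <-].
rewrite -integralT_nnsfun.
rewrite (ae_eq_integral (cst 0)) ?integral0 //.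
- apply/measurable_realfun.measurable_EFinP; exact: measurable_funPT.
- apply: filterS fae => x fx0 _ /=.
  have := hf x; rewrite fx0 => h0; apply/eqP; rewrite eq_le h0 /= lee_fin.
  exact: fun_ge0.
Qed.

Lemma ae0_integral (f : T -> \bar R) :
  {ae mu, forall x, f x = 0} -> \int[mu]_x f x = 0.
Proof.
move=> fae; rewrite integralE.
have -> : \int[mu]_x f^\+ x = 0.
  apply: ge0_ae0_integral; first by move=> x; exact: funepos_ge0.
  by apply: filterS fae => x fx0; rewrite funeposE fx0 maxxx.
have -> : \int[mu]_x f^\- x = 0.
  apply: ge0_ae0_integral; first by move=> x; exact: funeneg_ge0.
  by apply: filterS fae => x fx0; rewrite funenegE fx0 oppe0 maxxx.
by rewrite subee.
Qed.
End ae0.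

Section disk.
Context (R : realType).
Notation mu := (@lebesgue_measure R).

Lemma sqr_lt_sqrt (y a : R) : (y ^+ 2 < a) = (`|y| < Num.sqrt a).
Proof.
have [a0|a0] := leP a 0.
  rewrite (_ : Num.sqrt a = 0); last by apply/eqP; rewrite sqrtr_eq0.
  rewrite [RHS]ltNge normr_ge0 /=; apply/negbTE; rewrite -leNgt.
  exact: le_trans a0 (sqr_ge0 y).
by rewrite -sqrtr_sqr ltr_sqrt.
Qed.

Definition disk (r : R) := [set z : R * R | z.1 ^+ 2 + z.2 ^+ 2 < r ^+ 2].

Lemma xsection_disk r x : xsection (disk r) x =
  `](- Num.sqrt (r ^+ 2 - x ^+ 2)), (Num.sqrt (r ^+ 2 - x ^+ 2))[%classic.
Proof.
rewrite /xsection /disk; apply/seteqP; split => y /=.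
  rewrite inE /= => h; rewrite in_itv /= -ltr_norml -sqr_lt_sqrt.
  by rewrite ltrBrDl.
by rewrite in_itv /= -ltr_norml -sqr_lt_sqrt ltrBrDl => h; rewrite inE.
Qed.

Lemma mu_xsection_disk r x : mu (xsection (disk r) x) =
  (2 * Num.sqrt (r ^+ 2 - x ^+ 2))%:E.
Proof.
rewrite xsection_disk lebesgue_measure_itv /= lte_fin.
case: ifPn => h.
  by rewrite -EFinD opprK mulr2n mulrDl mul1r.
have -> : Num.sqrt (r ^+ 2 - x ^+ 2) = 0.
  apply/eqP; rewrite eq_le sqrtr_ge0 andbT.
  move: h; rewrite -leNgt => h.
  have := sqrtr_ge0 (r ^+ 2 - x ^+ 2); lra.
by rewrite mulr0.
Qed.

Lemma is_derive1_cont (f : R -> R) (x d : R) : is_derive x (1:R) f d -> {for x, continuous f}.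
Proof.
move=> h; apply: differentiable_continuous; apply/derivable1_diffP.
by case: h.
Qed.

Definition Fs (r : R) := fun t : R => r * sin t.
Definition Hs (r : R) := fun t : R => r ^+ 2 * (t + sin t * cos t).
Definition Gs (r : R) := fun x : R => 2 * Num.sqrt (r ^+ 2 - x ^+ 2).

Lemma Fs_derive (r t : R) : is_derive t (1:R) (Fs r) (r * cos t).
Proof.
have -> : Fs r = r *: (@sin R) by apply/funext => y.
have := is_deriveZ r (is_derive_sin t).
by [].
Qed.

Lemma Fs_derive1 (r : R) : (Fs r)^`()%classic = fun t => r * cos t.
Proof. by apply/funext => t; rewrite derive1E; apply: derive_val; exact: Fs_derive. Qed.

Lemma Hs_derive (r t : R) : is_derive t (1:R) (Hs r) (2 * r ^+ 2 * cos t ^+ 2).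
Proof.
have -> : Hs r = r ^+ 2 *: (id + (@sin R) * (@cos R)) by apply/funext => y.
have h := is_deriveZ (r ^+ 2) (is_deriveD (is_derive_id t 1)
   (is_deriveM (is_derive_sin t) (is_derive_cos t))).
apply: is_derive_eq.
have s2 := sin2cos2 t.
rewrite /GRing.scale /=. rewrite mulrN -!expr2 s2; ring.
Qed.


Lemma cont_Gs (r : R) : continuous (Gs r).
Proof.
move=> x.
have h1 : {for x, continuous (fun y : R => r ^+ 2 - y ^+ 2)}.
  apply: continuousB; first exact: cst_continuous.
  exact: exprn_continuous.
have h2 := continuous_comp h1 (@sqrt_continuous R _).
have h0 : {for x, continuous (cst (2:R))} by exact: cst_continuous.
exact: (continuousM h0 h2).
Qed.

Lemma cont_rcos (r : R) : continuous (fun t : R => r * cos t).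
Proof.
move=> x.
have h0 : {for x, continuous (cst r)} by exact: cst_continuous.
exact: (continuousM h0 (@continuous_cos R x)).
Qed.

Lemma cont_h (r : R) : continuous (fun t : R => 2 * r ^+ 2 * cos t ^+ 2).
Proof.
have -> : (fun t : R => 2 * r ^+ 2 * cos t ^+ 2) =
    (cst (2 * r ^+ 2)) \* ((@cos R) \* (@cos R)).
  by apply/funext => t; rewrite /= expr2.
move=> x.
have h0 : {for x, continuous (cst (2 * r ^+ 2))} by exact: cst_continuous.
exact: (continuousM h0 (continuousM (@continuous_cos R x) (@continuous_cos R x))).
Qed.

Lemma disk_integral (r : R) : 0 < r ->
  (\int[mu]_x (Gs r x)%:E = (pi * r ^+ 2)%:E)%E.
Proof.
move=> r0.
have Gout x : x \notin `[-r, r] -> Gs r x = 0.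
  rewrite in_itv /= -ler_norml -ltNge ltr_normr => xr.
  rewrite /Gs (_ : Num.sqrt _ = 0) ?mulr0 //; apply/eqP; rewrite sqrtr_eq0.
  by case/orP: xr => xr; nra.
rewrite (_ : (fun x => (Gs r x)%:E) = ((fun x => (Gs r x)%:E) \_ `[-r, r]));
  last first.
  apply/funext => x; rewrite patchE; case: ifPn => // xn; rewrite Gout //.
  by move: xn; apply: contra => h; rewrite inE.
rewrite -integral_mkcond.
have Fa : Fs r (- (pi / 2)) = - r by rewrite /Fs sinN sin_pihalf mulrN1.
have Fb : Fs r (pi / 2) = r by rewrite /Fs sin_pihalf mulr1.
have pi2 : - (pi / 2) < pi / 2 :> R.
  have : 0 < pi / 2 :> R by rewrite divr_gt0 // pi_gt0.
  lra.
have sub := @integration_by_substitution_increasing R (Fs r) (Gs r)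
  (- (pi / 2)) (pi / 2) (ltW pi2).
rewrite Fa Fb in sub; rewrite sub; last first.
- exact: continuous_subspaceT (cont_Gs r).
- split.
  + by move=> t _; case: (Fs_derive r t).
  + by apply: cvg_at_right_filter; exact: is_derive1_cont (Fs_derive r _).
  + by apply: cvg_at_left_filter; exact: is_derive1_cont (Fs_derive r _).
- rewrite Fs_derive1; apply/cvg_ex; exists (r * cos (pi / 2)) => /=.
  apply: cvg_at_left_filter; exact: cont_rcos.
- rewrite Fs_derive1; apply/cvg_ex; exists (r * cos (- (pi / 2))) => /=.
  apply: cvg_at_right_filter; exact: cont_rcos.
- rewrite Fs_derive1 => t _; exact: cont_rcos.
- move=> x y xI yI xy; rewrite /Fs ltr_pM2l // ltr_sin //.
rewrite Fs_derive1.
transitivity (\int[mu]_(t in `[(- (pi / 2))%R, (pi / 2)%R]) (2 * r ^+ 2 * cos t ^+ 2)%:E)%E.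
  apply: eq_integral => t; rewrite inE /= in_itv /= => tI.
  have c0 := cos_ge0_pihalf tI.
  rewrite /= /Gs /Fs /=.
  change ((2 * Num.sqrt (r ^+ 2 - (r * sin t) ^+ 2) * (r * cos t))%:E = (2 * r ^+ 2 * cos t ^+ 2)%:E).
  have -> : r ^+ 2 - (r * sin t) ^+ 2 = (r * cos t) ^+ 2.
    by rewrite !exprMn cos2sin2; ring.
  rewrite sqrtr_sqr ger0_norm; last by apply: mulr_ge0 => //; exact: ltW.
  congr (_%:E); ring.
rewrite (@continuous_FTC2 R (fun t => 2 * r ^+ 2 * cos t ^+ 2) (Hs r)) //.
- rewrite /Hs sin_pihalf cos_pihalf sinN sin_pihalf cosN cos_pihalf -EFinD.
  by congr (_%:E); field.
- exact: continuous_subspaceT (cont_h r).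
- split.
  + by move=> t _; case: (Hs_derive r t).
  + by apply: cvg_at_right_filter; exact: is_derive1_cont (Hs_derive r _).
  + by apply: cvg_at_left_filter; exact: is_derive1_cont (Hs_derive r _).
- by move=> t _; rewrite derive1E; apply: derive_val; exact: Hs_derive.
Qed.


Lemma leb2_disk (r : R) : 0 < r -> leb2 (disk r) = (pi * r ^+ 2)%:E.
Proof.
move=> r0; rewrite -disk_integral //.
change ((\int[mu]_x mu (xsection (disk r) x))%E = (\int[mu]_x (Gs r x)%:E)%E).
by apply: eq_integral => x _; rewrite mu_xsection_disk.
Qed.

Lemma measurable_disk (r : R) : measurable (disk r).
Proof.
have mg : measurable_fun setT (fun z : R * R => z.1 ^+ 2 + z.2 ^+ 2).
  apply: measurable_realfun.measurable_funD.
    exact: measurable_realfun.measurable_funX measurable_fst.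
  exact: measurable_realfun.measurable_funX measurable_snd.
rewrite (_ : disk r = setT `&` (fun z : R * R => z.1 ^+ 2 + z.2 ^+ 2) @^-1`
   `]-oo, r ^+ 2[); last first.
  by apply/seteqP; split => z /=; rewrite ?in_itv /= /disk /=; [move=> h; split | case].
by apply: mg.
Qed.

End disk.
Arguments disk {R}.
Arguments leb2_disk {R}.
Arguments measurable_disk {R}.

Section main.
Context (R : realType).
Local Notation mu2 := (@leb2 R).
Local Open Scope ereal_scope.

Lemma L1_measurable (u : R * R -> R) : L1 u -> measurable_fun setT u.
Proof.
by move=> /integrableP [mu _]; apply/measurable_realfun.measurable_EFinP.
Qed.

Lemma holder_disk (u : R * R -> R) (r : R) : (0 < r)%R -> measurable_fun setT u ->
  \int[mu2]_x (`|\1_(disk r) x * u x|)%:E <=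
    (r * Num.sqrt pi)%:E * 'N[mu2]_2%:E[(fun x => (u x)%:E)].
Proof.
move=> r0 mu.
have mi : measurable_fun setT (\1_(disk r) : R * R -> R).
  exact: measurable_realfun.measurable_indic (measurable_disk r).
have := @hoelder _ _ _ mu2 (\1_(disk r)) u 2 2 mi mu (@ltr0Sn R 1) (@ltr0Sn R 1).
have h2 : (2^-1 + 2^-1 = 1 :> R)%R by field.
move=> /(_ h2) H.
have N1 : 'N[mu2]_2%:E[EFin \o \1_(disk r)] = (r * Num.sqrt pi)%:E.
  rewrite unlock /=.
  have e x : (`|\1_(disk r) x : R| `^ 2 = \1_(disk r) x :> R)%R.
    rewrite indicE.
    by case: (x \in disk r); rewrite ?normr1 ?normr0 ?powR1 ?powR0.
  under eq_integral => x _ do rewrite e.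
  rewrite integral_indic // ?setIT; last exact: measurable_disk.
  change ((leb2 (disk r)) `^ 2^-1 = (r * Num.sqrt pi)%:E).
  rewrite leb2_disk // poweR_EFin powR12_sqrt; last first.
    by apply: mulr_ge0; [exact: pi_ge0|exact: sqr_ge0].
  by rewrite sqrtrM ?pi_ge0 // sqrtr_sqr ger0_norm 1?mulrC //; exact: ltW.
rewrite N1 Lnorm1 in H.
suff -> : \int[mu2]_x (`|\1_(disk r) x * u x|)%:E =
    \int[mu2]_x `|(EFin \o (\1_(disk r) \* u)%R) x| by exact: H.
by apply: eq_integral => x _.
Qed.


Lemma L1_tri (f u : R * R -> R) (r : R) : measurable_fun setT f ->
  measurable_fun setT u ->
  {ae mu2, forall x, (r ^+ 2 <= x.1 ^+ 2 + x.2 ^+ 2)%R -> f x = 0%R} ->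
  L1norm f <= L1norm (fun x => (u x - f x)%R) +
    \int[mu2]_x (`|\1_(disk r) x * u x|)%:E.
Proof.
move=> mf mu hf.
have mi : measurable_fun setT (\1_(disk r) : R * R -> R).
  exact: measurable_realfun.measurable_indic (measurable_disk r).
have m1 : measurable_fun setT (fun x => ((`|u x - f x| : R)%:E)).
  apply/measurable_realfun.measurable_EFinP.
  apply: measurableT_comp => //; exact: measurable_funB.
have m2 : measurable_fun setT (fun x => ((`|\1_(disk r) x * u x| : R)%:E)).
  apply/measurable_realfun.measurable_EFinP.
  apply: measurableT_comp => //; exact: measurable_funM.
rewrite /L1norm -ge0_integralD //.
apply: ae_ge0_le_integral => //.
- apply/measurable_realfun.measurable_EFinP.
  exact: measurableT_comp.
- by move=> x _; rewrite adde_ge0 // lee_fin normr_ge0.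
- exact: emeasurable_funD.
case: hf => N [mN N0 sub]; exists N; split => // x /= nP; apply: sub => /= hx.
apply: nP => _; rewrite -EFinD lee_fin indicE.
have [xB|xB] := boolP (x \in disk r).
  rewrite mul1r addrC.
  have := ler_normB (u x) (u x - f x)%R; rewrite opprB addrCA subrr addr0.
  by [].
rewrite hx ?normr0 ?addr_ge0 //.
by move: xB; rewrite notin_setE /disk /= => /negP; rewrite -leNgt.
Qed.


Lemma C1_cst0 : C1_R2 (fun _ : R * R => 0%R).
Proof.
have D0 (v : R * R) : (fun x => 'D_v (fun _ : R * R => 0%R) x) = cst 0%R.
  by apply/funext => x; exact: derive_cst.
split; [|split; [|split]].
- by move=> x; exact: derivable_cst.
- by move=> x; exact: derivable_cst.
- by rewrite D0; exact: cst_continuous.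
- by rewrite D0; exact: cst_continuous.
Qed.

Lemma C1c0 : C1c_field (fun _ : R * R => 0%R) (fun _ => 0%R).
Proof.
split; [exact: C1_cst0|split; [exact: C1_cst0|]].
rewrite (_ : [set x | _] = set0) ?closure0; first exact: compact0.
by apply/seteqP; split => x //=; rewrite eqxx; case.
Qed.

Lemma div2_0 (x : R * R) : div2 (fun _ => 0%R) (fun _ => 0%R) x = 0%R.
Proof. by rewrite /div2 !derive_cst addr0. Qed.

Lemma aniso_TV_ge0 (u : R * R -> R) : 0 <= aniso_TV u.
Proof.
rewrite /aniso_TV; apply: ereal_sup_ubound => /=.
exists ((fun _ => 0%R), (fun _ => 0%R)).
  split; first exact: C1c0.
  by move=> x; rewrite normr0; split; exact: ler01.
rewrite /=; under eq_integral => x _ do rewrite div2_0 mulr0.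
by rewrite integral0.
Qed.

Lemma aniso_TV_ae0 (u : R * R -> R) : {ae mu2, forall x, u x = 0%R} ->
  aniso_TV u = 0.
Proof.
move=> h; apply/eqP; rewrite eq_le aniso_TV_ge0 andbT.
apply: ge_ereal_sup => _ [v _ <-].
rewrite ae0_integral //.
case: h => N [mN N0 sub]; exists N; split => // x /= nP; apply: sub => /= hx.
by apply: nP; rewrite hx mul0r.
Qed.

Lemma BV0 : BV (fun _ : R * R => 0%R).
Proof.
split; first exact: integrable0.
apply: (@le_lt_trans _ _ 0); last exact: ltey.
apply: ge_ereal_sup => _ [v _ <-].
by under eq_integral => x _ do rewrite mul0r; rewrite integral0.
Qed.

Lemma BV01_0 : BV01 (fun _ : R * R => 0%R).
Proof. by split; [exact: BV0| apply: aeW => x; left]. Qed.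


Lemma F1_ae0 (lam : R) (f u : R * R -> R) : L1 f -> L1 u ->
  {ae mu2, forall x, u x = 0%R} -> F1 lam f u = lam%:E * L1norm f.
Proof.
move=> Lf Lu h; rewrite /F1 aniso_TV_ae0 // add0e; congr (_ * _).
have mf := L1_measurable _ Lf; have mu := L1_measurable _ Lu.
rewrite /L1norm; apply: ae_eq_integral => //.
- apply/measurable_EFinP; apply: measurableT_comp => //; exact: measurable_funB.
- apply/measurable_EFinP; exact: measurableT_comp.
case: h => N [mN N0 sub]; exists N; split => // x /= nP; apply: sub => /= hx.
by apply: nP => _; rewrite hx sub0r normrN.
Qed.

Lemma core (f u : R * R -> R) (Rad C lam : R) : L1 f -> L1 u ->
  (0 < Rad)%R -> (0 < C)%R -> (0 <= lam)%R ->
  {ae mu2, forall x, (Rad ^+ 2 <= x.1 ^+ 2 + x.2 ^+ 2)%R -> f x = 0%R} ->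
  C%:E * 'N[mu2]_2%:E[(fun x => (u x)%:E)] <= aniso_TV u ->
  lam%:E * L1norm f <= lam%:E * L1norm (fun x => (u x - f x)%R) +
    (lam * (Rad * Num.sqrt pi) / C)%:E * aniso_TV u.
Proof.
move=> Lf Lu R0 C0 lam0 hf hC.
have mf := L1_measurable _ Lf; have mu := L1_measurable _ Lu.
have T := L1_tri f u Rad mf mu hf.
have H := holder_disk u Rad R0 mu.
apply: le_trans (lee_wpmul2l _ T) _; first by rewrite lee_fin.
rewrite ge0_muleDr; last 2 first.
- by apply: integral_ge0 => x _; rewrite lee_fin normr_ge0.
- by apply: integral_ge0 => x _; rewrite lee_fin normr_ge0.
apply: leeD2l.
apply: le_trans (lee_wpmul2l _ H) _; first by rewrite lee_fin.
rewrite muleA -EFinM.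
set k := (lam * (Rad * Num.sqrt pi) / C)%R.
have -> : (lam * (Rad * Num.sqrt pi) = k * C)%R.
  by rewrite /k; field; apply: lt0r_neq0.
rewrite EFinM -muleA; apply: lee_wpmul2l => //.
rewrite lee_fin; apply: divr_ge0; last exact: ltW.
apply: mulr_ge0 => //; apply: mulr_ge0; [exact: ltW|exact: sqrtr_ge0].
Qed.

End main.

Lemma fin_lty (R : realType) (x : \bar R) : x \is a fin_num -> (x < +oo)%E.
Proof. by rewrite fin_numElt => /andP[]. Qed.

Theorem mainTheorem1 (R : realType) (f : R * R -> R) (Rad C lam : R) :
  L1 f -> 0 < Rad ->
  {ae @leb2 R, forall x, Rad ^+ 2 <= x.1 ^+ 2 + x.2 ^+ 2 -> f x = 0} ->
  0 < C ->
  (forall u, BV u -> (C%:E * 'N[@leb2 R]_2%:E[(fun x => (u x)%:E)] <= aniso_TV u)%E) ->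
  0 <= lam -> lam < C / (Rad * Num.sqrt pi) ->
  (forall u, minimizer (@BV R) (F1 lam f) u <-> (BV u /\ {ae @leb2 R, forall x, u x = 0})) /\
  (forall u, minimizer (@BV01 R) (F1 lam f) u <-> (BV01 u /\ {ae @leb2 R, forall x, u x = 0})).
Proof.
move=> Lf R0 hf C0 hC lam0 lamlt.
set k := (lam * (Rad * Num.sqrt pi) / C)%R.
have sp : (0 < Num.sqrt pi :> R)%R by rewrite sqrtr_gt0 pi_gt0.
have k0 : (0 <= k)%R by rewrite /k divr_ge0 ?mulr_ge0 // ltW.
have k1 : (k < 1)%R.
  rewrite /k ltr_pdivrMr // mul1r.
  by move: lamlt; rewrite ltr_pdivlMr // mulr_gt0.
have Lffin : L1norm f \is a fin_num.
  rewrite ge0_fin_numE; last by apply: integral_ge0 => x _; rewrite lee_fin normr_ge0.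
  move/integrableP: Lf => [_]; rewrite /L1norm.
  by under eq_integral => x _ do rewrite abse_EFin.
have mfin : (lam%:E * L1norm f)%E \is a fin_num by rewrite fin_numM.
have F0 : F1 lam f (fun _ => 0%R) = (lam%:E * L1norm f)%E.
  by apply: F1_ae0 => //; [exact: (@BV0 R).1 | exact: aeW].
have key1 u : BV u -> (F1 lam f (fun _ => 0%R) <= F1 lam f u)%E.
  move=> Bu; rewrite F0 /F1.
  apply: le_trans (@core R f u Rad C lam Lf Bu.1 R0 C0 lam0 hf (hC u Bu)) _.
  rewrite [X in (_ <= X)%E]addeC; apply: leeD2l.
  by apply: gee_pMl; [|exact: (@aniso_TV_ge0 R u)|rewrite lee_fin ltW].
have key2 u : BV u -> (F1 lam f u <= F1 lam f (fun _ => 0%R))%E ->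
    {ae @leb2 R, forall x, u x = 0}.
  move=> Bu h.
  have c := @core R f u Rad C lam Lf Bu.1 R0 C0 lam0 hf (hC u Bu).
  have hCu := hC u Bu.
  rewrite F0 /F1 in h.
  have T0 := @aniso_TV_ge0 R u.
  have L0 : (0 <= lam%:E * L1norm (fun x => (u x - f x)%R))%E.
    by apply: mule_ge0; rewrite ?lee_fin //; apply: integral_ge0 => x _; rewrite lee_fin normr_ge0.
  have Tfin : aniso_TV u \is a fin_num.
    rewrite ge0_fin_numE //; apply: le_lt_trans (leeDl _ L0) _.
    by apply: le_lt_trans h _; exact: fin_lty.
  have LLfin : (lam%:E * L1norm (fun x => (u x - f x)%R))%E \is a fin_num.
    rewrite ge0_fin_numE //; apply: le_lt_trans (leeDr _ T0) _.
    by apply: le_lt_trans h _; exact: fin_lty.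
  have Tz : aniso_TV u = 0%E.
    move: h c T0; rewrite -(fineK Tfin) -(fineK LLfin) -(fineK mfin).
    rewrite -EFinM -!EFinD !lee_fin => h c T0.
    suff -> : fine (aniso_TV u) = 0 by [].
    rewrite -/k in c; apply/eqP; rewrite eq_le T0 andbT; nra.
  rewrite Tz pmule_rle0 ?lte_fin // in hCu.
  have N0 : ('N[@leb2 R]_2%:E[(fun x => (u x)%:E)] = 0)%E.
    by apply/eqP; rewrite eq_le hCu Lnorm_ge0.
  have two : (0 < (2:R)%:E)%E by rewrite lte_fin.
  have mu : _ := (integrableP _ _ _ (Bu.1)).1.
  have := @Lnorm_eq0_eq0 _ _ R (@leb2 R) (fun x => (u x)%:E) 2%:E mu two N0.
  case => N [mN N00 sub]; exists N; split => // x /= nP; apply: sub => /= hx.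
  by apply: nP; case: (hx I).
split => u; split.
- by case=> Bu min; split => //; apply: key2 => //; exact: min _ (@BV0 R).
- by case=> Bu u0; split => // w Bw; rewrite (@F1_ae0 R lam f u Lf Bu.1 u0) -F0; exact: key1.
- by case=> Bu min; split => //; apply: key2 Bu.1 _; exact: min _ (@BV01_0 R).
- by case=> Bu u0; split => // w Bw; rewrite (@F1_ae0 R lam f u Lf Bu.1.1 u0) -F0; exact: key1 _ Bw.1.
Qed.
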